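(* Let $\mathcal I$ index a finite set of strategies for the iterated Prisoner's Dilemma. Suppose the strategy indexed by $i^*\in\mathcal I$ is a strictly firm memory-one vector $\mathbf p^{i^*}$ with initial play $d$. If for no other $j\in\mathcal I$ is the strategy vector $\mathbf p^j$ firm, then $i^*$ is an ESS for the game $\{A_{ij}:i,j\in\mathcal I\}$.
   Context: Iterated Prisoner's Dilemma with normalized payoffs $T=1>R>P>S=0$, $2R>1$; outcomes ordered $cc,cd,dc,dd$ (own play first); payoff vectors $\mathbf S_X=(R,0,1,P)$, $\mathbf S_Y=(R,1,0,P)$. A memory-one strategy vector is $\mathbf p\in[0,1]^4$, $p_k$ the probability of playing $c$ after the $k$-th outcome, outcomes labeled from the player's own perspective; it is firm if $p_4=0$. A strategy is such a vector together with an initial play. For a strategy pattern of the opponent Y (any possibly random, history-dependent rule), a limit distribution is a limit point $\mathbf v$ of the Cesàro averages of the round-$n$ outcome distributions, with $s_X=\langle\mathbf v\cdot\mathbf S_X\rangle$, $s_Y=\langle\mathbf v\cdot\mathbf S_Y\rangle$. A memory-one $\mathbf p$ for X is strictly firm if it is firm and for every strategy pattern of Y and every associated limit distribution, $s_Y\ge P$ implies $v_4=1$. $A_{ij}$ is the long-run (Cesàro-limit) average payoff of X when X uses strategy $i$ and Y uses strategy $j$. $i^*$ is an ESS if $A_{ji^*}<A_{i^*i^*}$ for all $j\ne i^*$. *)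

(* Defs.v *)
From HB Require Import structures.
From mathcomp Require Import all_boot all_order all_algebra.
From mathcomp Require Import all_classical all_reals all_analysis.
Set Implicit Arguments. Unset Strict Implicit. Unset Printing Implicit Defensive.
Import Order.TTheory GRing.Theory Num.Theory numFieldNormedType.Exports.
Local Open Scope ring_scope.

(* Outcomes are 'I_4, ordered cc (0), cd (1), dc (2), dd (3), from X's
   perspective (X's own play first). A history is the sequence of outcomes
   of the rounds played so far. *)
Definition outcome := 'I_4.
Definition history := seq outcome.

Section IPD.
Variable R : realType.

Definition SX (Rw Pn : R) (o : outcome) : R :=
  match val o with 0%N => Rw | 1%N => 0 | 2%N => 1 | _ => Pn end.
Definition SY (Rw Pn : R) (o : outcome) : R :=
  match val o with 0%N => Rw | 1%N => 1 | 2%N => 0 | _ => Pn end.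

Definition dotv (v S : outcome -> R) : R := \sum_(o < 4) v o * S o.

(* a memory-one strategy vector: p k = probability of playing c after the
   k-th outcome (own perspective) *)
Definition memvec := outcome -> R.
Definition is_memvec (p : memvec) := forall k, 0 <= p k <= 1.
Definition firm (p : memvec) := p (inord 3) = 0.

(* a strategy pattern of Y: probability that Y plays c in the next round,
   as a function of the whole history so far (outcomes recorded from X's
   perspective) *)
Definition pattern := history -> R.
Definition is_pattern (q : pattern) := forall h, 0 <= q h <= 1.

Definition Xprob (p : memvec) (x0 : bool) (h : history) : R :=
  match h with
  | [::] => if x0 then 1 else 0
  | o :: h' => p (last o h')
  end.

Definition out_prob (px py : R) (o : outcome) : R :=
  (if (val o < 2)%N then px else 1 - px) *
  (if odd (val o) then 1 - py else py).

Definition hist_prob (p : memvec) (x0 : bool) (q : pattern) (h : history) : R :=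
  \prod_(k < size h)
    out_prob (Xprob p x0 (take k h)) (q (take k h)) (nth ord0 h k).

(* distribution of the outcome of round n (rounds numbered from 0) *)
Definition round_dist (p : memvec) (x0 : bool) (q : pattern) (n : nat)
  (o : outcome) : R :=
  \sum_(h : (n.+1).-tuple outcome | tnth h ord_max == o)
     hist_prob p x0 q (tval h).

Definition cesaro (p : memvec) (x0 : bool) (q : pattern) (N : nat)
  (o : outcome) : R :=
  (N.+1)%:R^-1 * \sum_(n < N.+1) round_dist p x0 q n o.

Definition limit_dist (p : memvec) (x0 : bool) (q : pattern)
  (v : outcome -> R) : Prop :=
  forall e : R, 0 < e -> forall M : nat, exists N : nat,
    (M <= N)%N /\ forall o, `|cesaro p x0 q N o - v o| < e.

Definition strictly_firm (Rw Pn : R) (p : memvec) : Prop :=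
  firm p /\
  forall (x0 : bool) (q : pattern), is_pattern q ->
  forall v, limit_dist p x0 q v -> Pn <= dotv v (SY Rw Pn) -> v (inord 3) = 1.

(* outcome from Y's perspective: swap cd and dc *)
Definition swap_out (o : outcome) : outcome :=
  if val o == 1%N then inord 2 else if val o == 2%N then inord 1 else o.

Definition mem_pattern (q : memvec) (y0 : bool) : pattern :=
  fun h => match h with
  | [::] => if y0 then 1 else 0
  | o :: h' => q (swap_out (last o h'))
  end.

Definition payoffA (Rw Pn : R) (p : memvec) (x0 : bool) (q : memvec) (y0 : bool) : R :=
  limn (fun N => dotv (cesaro p x0 (mem_pattern q y0) N) (SX Rw Pn)).

End IPD.

(* Main.v *)
Require Import Defs.
From HB Require Import structures.
From mathcomp Require Import all_boot all_order all_algebra.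
From mathcomp Require Import all_classical all_reals all_analysis.
From mathcomp Require Import zify ring lra.
Import Order.TTheory GRing.Theory Num.Theory numFieldNormedType.Exports.
Set Implicit Arguments. Unset Strict Implicit.
Local Open Scope ring_scope.
Local Open Scope classical_set_scope.
Lemma limn_nc (R : realType) (u : nat -> R) : ~ cvgn u -> limn u = 0.
Proof.
move=> h; rewrite /lim /lim_in getPN //= => x ux; apply: h.
by apply/cvg_ex; exists x.
Qed.
Lemma bnd01 (R : realType) (u : nat -> R) : (forall n, 0 <= u n <= 1) -> bounded_fun u.
Proof.
move=> h. exists 1; split => //= x x1 n _.
have := h n. move=> /andP[a b]. rewrite ger0_norm //. apply: le_trans b _. exact: ltW.
Qed.
Definition conv (R : realType) (w : nat -> R) (l : R) :=
  forall e : R, 0 < e -> exists M, forall n, (M <= n)%N -> `|w n - l| < e.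

Lemma cvgn_conv (R : realType) (w : nat -> R) : cvgn w -> conv w (limn w).
Proof.
move=> /cvgrPdist_lt H e he; case: (H e he) => M _ HM.
by exists M => n Mn; rewrite distrC; apply: HM.
Qed.

Lemma incr_ge (f : nat -> nat) : {mono f : n m / (n <= m)%N >-> (n <= m)%O} -> forall n, (n <= f n)%N.
Proof.
move=> hf; elim=> [//|n IH].
have : (f n < f n.+1)%N.
  rewrite ltnNge. have := hf n.+1 n. rewrite leEnat => ->. by rewrite ltnn.
lia.
Qed.

Lemma conv_sub (R : realType) (w : nat -> R) l (f : nat -> nat) :
  {mono f : n m / (n <= m)%N >-> (n <= m)%O} -> conv w l -> conv (w \o f) l.
Proof.
move=> hf hw e he; case: (hw e he) => M HM; exists M => n Mn /=.
apply: HM; apply: leq_trans Mn (incr_ge hf n).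
Qed.

Lemma bw01 (R : realType) (w : nat -> R) : (forall n, 0 <= w n <= 1) ->
  exists f : nat -> nat, {mono f : n m / (n <= m)%N >-> (n <= m)%O} /\ exists l, conv (w \o f) l.
Proof.
move=> h; have [f hf cf] := bolzano_weierstrass (bnd01 h).
exists f; split => //; exists (limn (w \o f)); exact: cvgn_conv.
Qed.

Lemma cluster4 (R : realType) (u : nat -> 'I_4 -> R) :
  (forall n o, 0 <= u n o <= 1) ->
  exists v : 'I_4 -> R, forall e : R, 0 < e -> forall M : nat, exists N : nat,
    (M <= N)%N /\ forall o, `|u N o - v o| < e.
Proof.
move=> hu.
suff [g [hg [v hv]]] : exists g : nat -> nat,
   {mono g : n m / (n <= m)%N >-> (n <= m)%O} /\ exists v : 'I_4 -> R,
   forall o, o \in enum 'I_4 -> conv (fun n => u (g n) o) (v o).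
  exists v => e he M.
  have H : forall s : seq 'I_4, (forall o, o \in s -> o \in enum 'I_4) ->
     exists K, forall n, (K <= n)%N -> forall o, o \in s -> `|u (g n) o - v o| < e.
    elim=> [|o s IH] hs; first by exists 0%N.
    case: IH => [x xs|K HK]; first by apply: hs; rewrite inE xs orbT.
    case: (hv o (hs o (mem_head _ _)) e he) => K' HK'.
    exists (maxn K K') => n Kn o'; rewrite inE => /orP[/eqP ->|os].
      by apply: HK'; apply: leq_trans Kn; exact: leq_maxr.
    by apply: HK => //; apply: leq_trans Kn; exact: leq_maxl.
  case: (H (enum 'I_4)) => // K HK.
  exists (g (maxn M K)); split.
    by apply: leq_trans (incr_ge hg _); exact: leq_maxl.
  by move=> o; apply: HK; [exact: leq_maxr | rewrite mem_enum].
elim: (enum 'I_4) => [|o s [g [hg [v hv]]]].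
  by exists id; split => //; exists (fun=> 0).
have [f [hf [l hl]]] := bw01 (fun n => hu (g n) o).
exists (g \o f); split.
  by move=> n m /=; rewrite hg -!leEnat hf.
exists (fun x => if x == o then l else v x) => o'; rewrite inE.
case: eqP => [-> _|neq /= os]; first exact: hl.
exact: (conv_sub (w := fun n => u (g n) o') hf (hv o' os)).
Qed.

Definition tsplit (T : Type) m (u : m.+1.-tuple T) : m.-tuple T * T :=
  (belast_tuple (thead u) (behead_tuple u), last (thead u) (behead u)).
Definition tjoin (T : Type) m (p : m.-tuple T * T) : m.+1.-tuple T :=
  rcons_tuple p.1 p.2.

Lemma sum_tuple_rcons (R : realType) (T : finType) m (F : seq T -> R) :
  \sum_(t : m.+1.-tuple T) F t = \sum_(t : m.-tuple T) \sum_(x : T) F (rcons t x).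
Proof.
rewrite pair_big /=.
rewrite (reindex (@tjoin T m)) /=; last first.
  apply: onW_bij; exists (@tsplit T m).
    case=> t x; rewrite /tsplit /tjoin /=; congr (_, _).
      apply: val_inj => /=; case: t => [[|y s] hs] //=.
      by rewrite belast_rcons.
    case: t => [[|y s] hs] //=; by rewrite last_rcons.
  move=> u; apply: val_inj; rewrite /tsplit /tjoin /=.
  case: u => [[|y s] hs] //=; by rewrite -lastI.
by [].
Qed.

Section Prob.
Variable R : realType.
Variables (p : memvec R) (x0 : bool) (q : pattern R).
Hypothesis hp : is_memvec p.
Hypothesis hq : is_pattern q.

Lemma hist_prob_rcons h o : hist_prob p x0 q (rcons h o) =
  hist_prob p x0 q h * out_prob (Xprob p x0 h) (q h) o.
Proof.
rewrite /hist_prob size_rcons big_ord_recr /=; congr (_ * _).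
  apply: eq_bigr => k _ /=.
  have kh : (k <= size h)%N by apply: ltnW.
  rewrite -cats1 takel_cat // nth_cat ltn_ord //.
by rewrite -cats1 take_size_cat // nth_cat ltnn subnn.
Qed.

Lemma sum_out (px py : R) : \sum_(o < 4) out_prob px py o = 1.
Proof.
rewrite !big_ord_recr big_ord0 /= /out_prob /=. ring.
Qed.

Lemma out_ge0 (px py : R) : 0 <= px <= 1 -> 0 <= py <= 1 -> forall o, 0 <= out_prob px py o.
Proof.
move=> /andP[a b] /andP[c d] o; rewrite /out_prob.
apply: mulr_ge0; case: ifP => _; rewrite ?subr_ge0 //.
Qed.

Lemma Xprob01 h : 0 <= Xprob p x0 h <= 1.
Proof.
case: h => [|o h] /=; last exact: hp.
case: x0; rewrite ?ler01 ?lexx //.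
Qed.

Lemma hist_ge0 h : 0 <= hist_prob p x0 q h.
Proof.
rewrite /hist_prob; apply: prodr_ge0 => k _; apply: out_ge0; [exact: Xprob01|exact: hq].
Qed.

Lemma rd_eq n o : round_dist p x0 q n o =
  \sum_(t : n.-tuple outcome) hist_prob p x0 q t * out_prob (Xprob p x0 t) (q t) o.
Proof.
rewrite /round_dist big_mkcond /=.
rewrite (eq_bigr (fun t : n.+1.-tuple outcome =>
   (fun s : seq outcome => if nth ord0 s n == o then hist_prob p x0 q s else 0) t));
  last by move=> t _; rewrite (tnth_nth ord0).
rewrite (@sum_tuple_rcons _ _ n (fun s : seq outcome => if nth ord0 s n == o then hist_prob p x0 q s else 0)); apply: eq_bigr => t _.
rewrite (bigD1 o) //= big1 ?addr0.
  by rewrite nth_rcons size_tuple ltnn eqxx eqxx hist_prob_rcons.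
by move=> x xo; rewrite nth_rcons size_tuple ltnn eqxx (negbTE xo).
Qed.

Lemma tot_eq n : \sum_(t : n.-tuple outcome) hist_prob p x0 q t = 1.
Proof.
elim: n => [|n IH].
  rewrite (eq_bigr (fun=> hist_prob p x0 q [::])); last by move=> t _; rewrite tuple0.
  by rewrite sumr_const card_tuple expn0 /hist_prob big_ord0.
rewrite sum_tuple_rcons -IH; apply: eq_bigr => t _.
under eq_bigr do rewrite hist_prob_rcons.
by rewrite -mulr_sumr sum_out mulr1.
Qed.

Lemma rd_tot n : \sum_(o < 4) round_dist p x0 q n o = 1.
Proof.
under eq_bigr do rewrite rd_eq.
rewrite exchange_big /= -(tot_eq n); apply: eq_bigr => t _.
by rewrite -mulr_sumr sum_out mulr1.
Qed.

Lemma rd_ge0 n o : 0 <= round_dist p x0 q n o.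
Proof. rewrite /round_dist; apply: sumr_ge0 => t _; exact: hist_ge0. Qed.

End Prob.

Lemma swapK : involutive swap_out.
Proof.
by case=> [[|[|[|[|k]]]] hk] //; apply: val_inj; rewrite /swap_out /= ?inordK.
Qed.

Lemma swap_inj : injective swap_out.
Proof. exact: inv_inj swapK. Qed.

Lemma out_swap (R : realType) (px py : R) o : out_prob px py (swap_out o) = out_prob py px o.
Proof.
case: o => [[|[|[|[|k]]]] hk] //; rewrite /out_prob /swap_out /= ?inordK //=; ring.
Qed.

Lemma SX_swap (R : realType) (Rw Pn : R) o : SX Rw Pn o = SY Rw Pn (swap_out o).
Proof.
by case: o => [[|[|[|[|k]]]] hk] //; rewrite /SX /SY /swap_out /= ?inordK.
Qed.

Lemma hist_swap (R : realType) (P1 P2 : memvec R) x1 x2 h :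
  hist_prob P1 x1 (mem_pattern P2 x2) h =
  hist_prob P2 x2 (mem_pattern P1 x1) (map swap_out h).
Proof.
rewrite /hist_prob size_map; apply: eq_bigr => k _.
rewrite -map_take (nth_map ord0) // -out_swap.
case: (take k h) => [|o h'] //=.
by rewrite last_map swapK.
Qed.

Lemma rd_swap (R : realType) (P1 P2 : memvec R) x1 x2 n o :
  round_dist P1 x1 (mem_pattern P2 x2) n o =
  round_dist P2 x2 (mem_pattern P1 x1) n (swap_out o).
Proof.
rewrite /round_dist (reindex_inj (h := map_tuple swap_out)) /=; last first.
  by move=> u w /(congr1 val) /= /(congr1 (map swap_out)); rewrite !mapK //; [move/val_inj|exact: swapK..].
apply: eq_big => t.
  by rewrite tnth_map -{1}(swapK o) (inj_eq swap_inj).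
by move=> _; rewrite hist_swap mapK //; exact: swapK.
Qed.

Lemma last_tuple n (t : n.+1.-tuple outcome) : exists o h, tval t = o :: h /\ last o h = tnth t ord_max.
Proof.
case: t => [[|o h] sz] //=; exists o, h; split => //.
rewrite (tnth_nth ord0) /=.
have -> : n = size h by move/eqP: sz => /= [].
by rewrite -[last o h]/(last ord0 (o :: h)) -(nth_last ord0).
Qed.

Section Flow.
Variable R : realType.
Variables (p : memvec R) (x0 : bool) (q : pattern R).
Hypothesis hp : is_memvec p.
Hypothesis hq : is_pattern q.

Lemma flow n (of_ ot : outcome) (c : R) :
  (forall t : n.+1.-tuple outcome, tnth t ord_max = of_ ->
      out_prob (Xprob p x0 t) (q t) ot = c) ->
  c * round_dist p x0 q n of_ <= round_dist p x0 q n.+1 ot.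
Proof.
move=> hc; rewrite (rd_eq p x0 q n.+1 ot) /round_dist mulr_sumr.
rewrite [X in _ <= X](bigID (fun t : n.+1.-tuple outcome => tnth t ord_max == of_)) /=.
rewrite -[X in X <= _]addr0; apply: lerD.
  apply: ler_sum => t /eqP ht; rewrite hc // mulrC //.
apply: sumr_ge0 => t _; apply: mulr_ge0; first exact: hist_ge0.
apply: out_ge0; [exact: Xprob01|exact: hq].
Qed.

Lemma rd_le1 n o : round_dist p x0 q n o <= 1.
Proof.
rewrite -(rd_tot p x0 q n) (bigD1 o) //= lerDl.
by apply: sumr_ge0 => i _; apply: rd_ge0.
Qed.

End Flow.

Lemma mp_pat (R : realType) (P : memvec R) y0 : is_memvec P -> is_pattern (mem_pattern P y0).
Proof.
move=> hP [|o h] /=; last exact: hP.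
by case: y0; rewrite ?ler01 ?lexx.
Qed.

Lemma inord3 : val (inord 3 : 'I_4) = 3%N.
Proof. exact: (@inordK 3 3). Qed.

Lemma swap3 : swap_out (inord 3) = inord 3.
Proof. by rewrite /swap_out inord3. Qed.

Section Ces.
Variable R : realType.
Variables (p : memvec R) (x0 : bool) (q : pattern R).
Hypothesis hp : is_memvec p.
Hypothesis hq : is_pattern q.

Lemma ces_ge0 N o : 0 <= Defs.cesaro p x0 q N o.
Proof.
rewrite /Defs.cesaro; apply: mulr_ge0; first by rewrite invr_ge0.
by apply: sumr_ge0 => n _; apply: rd_ge0.
Qed.

Lemma ces_tot N : \sum_(o < 4) Defs.cesaro p x0 q N o = 1.
Proof.
rewrite /Defs.cesaro -mulr_sumr exchange_big /=.
under eq_bigr do rewrite rd_tot //.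
by rewrite sumr_const card_ord mulVf // pnatr_eq0.
Qed.

Lemma ces_le1 N o : Defs.cesaro p x0 q N o <= 1.
Proof.
rewrite -(ces_tot N) (bigD1 o) //= lerDl.
by apply: sumr_ge0 => i _; apply: ces_ge0.
Qed.

End Ces.

Lemma dot_close (R : realType) (a b S : outcome -> R) e :
  (forall o, `|a o - b o| < e) -> (forall o, `|S o| <= 1) ->
  `|dotv a S - dotv b S| <= 4%:R * e.
Proof.
move=> hab hS; rewrite /dotv -sumrB.
apply: le_trans (ler_norm_sum _ _ _) _.
have -> : 4%:R * e = \sum_(o < 4) e by rewrite sumr_const card_ord mulr_natl.
apply: ler_sum => o _; rewrite -mulrBl normrM.
rewrite -[X in _ <= X]mulr1; apply: ler_pM => //; [exact: ltW].
Qed.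

Lemma self_dd (R : realType) (ps : memvec R) : is_memvec ps -> firm ps ->
  forall n, round_dist ps false (mem_pattern ps false) n (inord 3) = 1.
Proof.
move=> hps hf; elim=> [|n IH].
  rewrite rd_eq (eq_bigr (fun=> 1)); first by rewrite sumr_const card_tuple expn0.
  move=> t _; rewrite tuple0 /= /hist_prob big_ord0 mul1r /out_prob inord3 /=.
  by rewrite !subr0 mulr1.
apply/eqP; rewrite eq_le rd_le1 //; last exact: mp_pat.
rewrite -{1}IH -[X in X <= _]mul1r; apply: (flow (c:=1) hps (mp_pat false hps)) => t ht.
case: (last_tuple t) => o0 [h [-> hl]].
rewrite /= hl ht swap3 hf /out_prob inord3 /=.
by rewrite !subr0 mulr1.
Qed.

Lemma self_pay (R : realType) (Rw Pn : R) (ps : memvec R) : is_memvec ps -> firm ps ->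
  payoffA Rw Pn ps false ps false = Pn.
Proof.
move=> hps hf.
have hq := mp_pat false hps.
have h0 : forall n o, o != inord 3 -> round_dist ps false (mem_pattern ps false) n o = 0.
  move=> n o ho.
  have := rd_tot ps false (mem_pattern ps false) n; rewrite (bigD1 (inord 3)) //= self_dd // => /eqP.
  move=> hs0; have hs : \sum_(i < 4 | i != inord 3) round_dist ps false (mem_pattern ps false) n i = 0 by lra.
  move: hs; rewrite (bigD1 o) //= => hs.
  apply/eqP; rewrite eq_le rd_ge0 // andbT.
  have : 0 <= \sum_(i < 4 | (i != inord 3) && (i != o)) round_dist ps false (mem_pattern ps false) n i.
    by apply: sumr_ge0 => i _; apply: rd_ge0.
  lra.
rewrite /payoffA.
have -> : (fun N => dotv (Defs.cesaro ps false (mem_pattern ps false) N) (SX Rw Pn)) = fun=> Pn.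
  apply: funext => N; rewrite /dotv (bigD1 (inord 3)) //= big1 ?addr0.
    rewrite /Defs.cesaro (eq_bigr (fun=> 1)) => [|n _]; last exact: self_dd.
    by rewrite sumr_const card_ord mulVf ?pnatr_eq0 // mul1r /SX inord3.
  move=> o ho; rewrite /Defs.cesaro big1 ?mulr0 ?mul0r // => n _; exact: h0.
by rewrite lim_cst.
Qed.

Close Scope classical_set_scope.
Unset Implicit Arguments. Set Strict Implicit.

Lemma inord2 : val (inord 2 : 'I_4) = 2%N.
Proof. exact: (@inordK 3 2). Qed.

Lemma SY_le1 (R : realType) (Rw Pn : R) : 0 < Pn -> Pn < Rw -> Rw < 1 ->
  forall o, `|SY Rw Pn o| <= 1.
Proof.
move=> h1 h2 h3; case=> [[|[|[|[|k]]]] hk] //=; rewrite /SY /=.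
- rewrite ger0_norm; [exact: ltW | lra].
- by rewrite normr1.
- by rewrite normr0.
- rewrite ger0_norm; lra.
Qed.

Theorem theorem5p4 (R : realType) (Rw Pn : R)
  (hT : Rw < 1) (hRP : Pn < Rw) (hP : 0 < Pn) (h2R : 1 < 2 * Rw)
  (I : finType) (vec : I -> memvec R) (init : I -> bool)
  (hvec : forall i, is_memvec (vec i))
  (istar : I)
  (hsf : strictly_firm Rw Pn (vec istar))
  (hinit : init istar = false)
  (hnf : forall j, j != istar -> ~ firm (vec j)) :
  let A := fun i j => payoffA Rw Pn (vec i) (init i) (vec j) (init j) in
  forall j, j != istar -> A j istar < A istar istar.
Proof.
move=> A j hj; rewrite /A hinit self_pay //; [|exact: hsf.1].
have hps := hvec istar; have hpj := hvec j.
set ps := vec istar in hsf hps *.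
set pj := vec j in hpj *; set xj := init j.
have hps3 : ps (inord 3) = 0 := hsf.1.
set a := pj (inord 3).
have ha : 0 < a.
  rewrite lt_def; case/andP: (hpj (inord 3)) => -> _; rewrite andbT.
  by apply/eqP => h; apply: (hnf j hj).
have ha1 : a <= 1 by case/andP: (hpj (inord 3)).
set q := mem_pattern pj xj.
have hq : is_pattern q := mp_pat xj hpj.
set u := fun N => Defs.cesaro ps false q N.
set s := fun N => dotv (Defs.cesaro pj xj (mem_pattern ps false) N) (SX Rw Pn).
have hsN : forall N, s N = dotv (u N) (SY Rw Pn).
  move=> N; rewrite /s /dotv (reindex_inj swap_inj) /=; apply: eq_bigr => o _.
  rewrite SX_swap swapK; congr (_ * _); rewrite /Defs.cesaro; congr (_ * _).
  by apply: eq_bigr => n _; rewrite rd_swap swapK.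
rewrite /payoffA -/s.
have [cv|ncv] := pselect (cvgn s); last by rewrite (limn_nc ncv).
have hc := cvgn_conv cv; set L := limn s in hc *.
rewrite ltNge; apply/negP => hL.
have [v hv] := @cluster4 R u (fun N o => introT andP (conj (ces_ge0 false hps hq N o) (ces_le1 false hps hq N o))).
have hld : limit_dist ps false q v := hv.
have hPv : Pn <= dotv v (SY Rw Pn).
  rewrite leNgt; apply/negP => hlt.
  set d := L - dotv v (SY Rw Pn).
  have hd : 0 < d by rewrite /d; lra.
  have [|M HM] := hc (d / 2); first by lra.
  have [|N [MN HN]] := hv (d / 8) _ M; first by lra.
  have := dot_close HN (@SY_le1 R Rw Pn hP hRP hT).
  have := HM N MN; rewrite hsN.
  have hdd : d = L - dotv v (SY Rw Pn) by [].
  rewrite !ler_norml !ltr_norml; lra.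
have v3 := hsf.2 false q hq v hld hPv.
pose rd := round_dist ps false q.
have hflow : forall n, a * rd n (inord 3) <= rd n.+1 (inord 2).
  move=> n; apply: flow => // t ht.
  case: (last_tuple t) => o0 [h [-> hl]].
  rewrite /= hl ht swap3 hps3 /out_prob inord2 /=.
  by rewrite subr0 mul1r.
have hS : forall N, a * (\sum_(n < N.+1) rd n (inord 3) - rd N (inord 3))
                    <= \sum_(n < N.+1) rd n (inord 2).
  elim=> [|N IH].
    rewrite big_ord1 subrr mulr0; apply: sumr_ge0 => n _; exact: (rd_ge0 false hps hq).
  rewrite (big_ord_recr N.+1) [X in _ <= X](big_ord_recr N.+1) /= addrK.
  apply: le_trans (lerD IH (hflow N)).
  by rewrite -mulrDr subrK.
have [|N [N3 HN]] := hv (a / 4) _ 3%N; first by lra.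
have H3 := HN (inord 3); rewrite v3 ltr_norml in H3.
have hsum : u N (inord 2) + u N (inord 3) <= 1.
  have := ces_tot ps false q N; rewrite (bigD1 (inord 3)) // (bigD1 (inord 2)) //=; last first.
    by apply/eqP => /(congr1 val); rewrite inord2 inord3.
  have : 0 <= \sum_(i < 4 | (i != inord 3) && (i != inord 2)) Defs.cesaro ps false q N i.
    by apply: sumr_ge0 => i _; apply: ces_ge0.
  rewrite /u /=; lra.
have hK : (4:R) <= N.+1%:R by rewrite ler_nat; exact: N3.
have hu : forall o, N.+1%:R * u N o = \sum_(n < N.+1) rd n o.
  by move=> o; rewrite /u /Defs.cesaro mulrA mulfV ?mul1r // pnatr_eq0.
have hr := rd_le1 false hps hq N (inord 3).
have := hS N; rewrite -!hu.
move: H3 hsum hK hr ha ha1; rewrite -/rd.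
set K := N.+1%:R; set y := u N (inord 3); set x := u N (inord 2); set r := rd N (inord 3).
move=> H3 hsum hK hr ha0 ha1' hfin.
have K0 : 0 <= K by lra.
have a0 : 0 <= a by lra.
have e1 : K * x <= K * (1 - y) by apply: ler_wpM2l => //; lra.
have e2 : a * r <= a * 1 by apply: ler_wpM2l.
have e3 : K * (1 - a / 4) <= K * y by apply: ler_wpM2l => //; lra.
have e4 : a * (K * (1 - a / 4)) <= a * (K * y) by apply: ler_wpM2l.
have e6 : 0 <= K * (1 - a) by apply: mulr_ge0 => //; lra.
have e7 : a * 1 <= a * (K - a * K / 4 - 1 - K / 4) by apply: ler_wpM2l => //; lra.
lra.
Qed.
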